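(* Suppose all type sets are equal, $\Theta_i=\Theta_0$ for all $i$, and let $h=(h_1,\dots,h_n)$ determine a Groves mechanism (for an efficient decision function $f$). Define $h':\Theta_0^{n-1}\to\mathbb{R}$ by $$h'(x):=\frac{1}{n!}\sum_{\pi\in\Pi(n-1)}\sum_{j=1}^n h_j(x^\pi),$$ where $\Pi(n-1)$ is the set of permutations of $\{1,\dots,n-1\}$ and $x^\pi_i:=x_{\pi^{-1}(i)}$; $h'$ determines an anonymous Groves mechanism. Let $G(\theta):=\sum_{j=1}^n v_j(f(\theta),\theta_j)$ and assume $G(\theta)=G(\theta^\pi)$ for all $\theta\in\Theta$ and all permutations $\pi$ of $\{1,\dots,n\}$ (where $\theta^\pi_i:=\theta_{\pi^{-1}(i)}$). Then: (i) if the Groves mechanism $h$ is feasible, so is $h'$; (ii) if an anonymous Groves mechanism $h^0$ is welfare dominated by $h$, then $h^0$ is welfare dominated by $h'$.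
   Context: Setting: decisions $D$, players $1,\dots,n$ ($n\ge 2$), type sets $\Theta_i$, $\Theta=\prod_i\Theta_i$, initial utilities $v_i:D\times\Theta_i\to\mathbb{R}$; a tax-based mechanism $(f,t)$ gives player $i$ final utility $v_i(f(\theta),\theta_i)+t_i(\theta)$. A Groves mechanism has $f(\theta)\in\arg\max_{d\in D}\sum_i v_i(d,\theta_i)$ and $t_i(\theta)=\sum_{j\ne i}v_j(f(\theta),\theta_j)+h_i(\theta_{-i})$ for arbitrary functions $h_i$ of the other players' types; it is identified with $(h_1,\dots,h_n)$. It is anonymous if all $\Theta_i$ are equal and all $h_i$ equal a single function $h$ that is permutation independent (symmetric in its $n-1$ arguments). A mechanism is feasible if $\sum_i t_i(\theta)\le 0$ for all $\theta$. For mechanisms with the same decision function, $t'$ welfare dominates $t$ if $\sum_i t_i(\theta)\le\sum_i t'_i(\theta)$ for all $\theta$, with strict inequality for some $\theta$. *)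

(* Defs.v *)
From HB Require Import structures.
From mathcomp Require Import all_boot all_order all_algebra all_fingroup.
Set Implicit Arguments. Unset Strict Implicit. Unset Printing Implicit Defensive.
Import Order.TTheory GRing.Theory Num.Theory.
Local Open Scope ring_scope.

Section Groves.
Variables (R : realFieldType) (D Theta0 : Type) (n : nat).

(* type profile of the other players: theta_{-i}, indexed by 'I_n.-1 via lift i *)
Definition others (theta : 'I_n -> Theta0) (i : 'I_n) : 'I_n.-1 -> Theta0 :=
  fun k => theta (lift i k).

Definition permute {m : nat} (x : 'I_m -> Theta0) (pi : {perm 'I_m}) : 'I_m -> Theta0 :=
  fun i => x ((pi^-1)%g i).

Definition Gsum (v : 'I_n -> D -> Theta0 -> R) (f : ('I_n -> Theta0) -> D)
  (theta : 'I_n -> Theta0) : R :=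
  \sum_(j < n) v j (f theta) (theta j).

Definition efficient (v : 'I_n -> D -> Theta0 -> R) (f : ('I_n -> Theta0) -> D) : Prop :=
  forall theta d, \sum_(j < n) v j d (theta j) <= \sum_(j < n) v j (f theta) (theta j).

Definition groves_tax (v : 'I_n -> D -> Theta0 -> R) (f : ('I_n -> Theta0) -> D)
  (h : 'I_n -> ('I_n.-1 -> Theta0) -> R) (i : 'I_n) (theta : 'I_n -> Theta0) : R :=
  \sum_(j < n | j != i) v j (f theta) (theta j) + h i (others theta i).

Definition feasible (t : 'I_n -> ('I_n -> Theta0) -> R) : Prop :=
  forall theta, \sum_(i < n) t i theta <= 0.

Definition welfare_dominates (t' t : 'I_n -> ('I_n -> Theta0) -> R) : Prop :=
  (forall theta, \sum_(i < n) t i theta <= \sum_(i < n) t' i theta) /\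
  (exists theta, \sum_(i < n) t i theta < \sum_(i < n) t' i theta).

Definition perm_indep (h : ('I_n.-1 -> Theta0) -> R) : Prop :=
  forall x (pi : {perm 'I_n.-1}), h (permute x pi) = h x.

Definition anon (h : ('I_n.-1 -> Theta0) -> R) : 'I_n -> ('I_n.-1 -> Theta0) -> R :=
  fun _ => h.

Definition symmetrize (h : 'I_n -> ('I_n.-1 -> Theta0) -> R) : ('I_n.-1 -> Theta0) -> R :=
  fun x => (n`!%:R)^-1 * \sum_(pi : {perm 'I_n.-1}) \sum_(j < n) h j (permute x pi).

End Groves.

(* Main.v *)
Require Import Defs.
From HB Require Import structures.
From mathcomp Require Import all_boot all_order all_algebra all_fingroup.
From Stdlib Require Import FunctionalExtensionality.
Set Implicit Arguments. Unset Strict Implicit. Unset Printing Implicit Defensive.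
Import Order.TTheory GRing.Theory Num.Theory.
Local Open Scope ring_scope.

Section S.
Variables (R : realFieldType) (T : Type) (m : nat).

Lemma key (h : 'I_m.+1 -> ('I_m -> T) -> R) (j : 'I_m.+1) (theta : 'I_m.+1 -> T) :
  \sum_(i < m.+1) \sum_(pi : {perm 'I_m}) h j (permute (others theta i) pi) =
  \sum_(s : {perm 'I_m.+1}) h j (others (permute theta s) j).
Proof.
rewrite [RHS](reindex_inj invg_inj) /=.
rewrite (partition_big (fun s : {perm 'I_m.+1} => s j) xpredT) //=.
apply: eq_bigr => i _.
rewrite (reindex_inj (@invg_inj (perm_of 'I_m))) /=.
rewrite (reindex (lift_perm j i)); last first.
  pose ulsf a (s : 'S_m.+1) k := odflt k (unlift (s a) (s (lift a k))).
  have ulsfK a (s : 'S_m.+1) k: lift (s a) (ulsf a s k) = s (lift a k).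
    rewrite /ulsf; have:= neq_lift a k.
    by rewrite -(can_eq (permK s)) => /unlift_some[] ? ? ->.
  have inj_ulsf: injective (ulsf j _).
    move=> s; apply: can_inj (ulsf (s j) s^-1%g) _ => k'.
    by rewrite {1}/ulsf ulsfK !permK liftK.
  exists (fun s => perm (inj_ulsf s)) => [s _ | s].
    by apply/permP=> k'; rewrite permE /ulsf lift_perm_lift lift_perm_id liftK.
  move/(s _ =P _) => si0; apply/permP=> k.
  case: (unliftP j k) => [k'|] ->; rewrite ?lift_perm_id //.
  by rewrite lift_perm_lift -si0 permE ulsfK.
apply: eq_big => [s | s _]; first by rewrite lift_perm_id eqxx.
congr (h j); apply: functional_extensionality => k.
by rewrite /others /permute !invgK lift_perm_lift.
Qed.

Variables (D : Type) (v : 'I_m.+1 -> D -> T -> R) (f : ('I_m.+1 -> T) -> D).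

Definition Tsum (h : 'I_m.+1 -> ('I_m -> T) -> R) theta :=
  \sum_(i < m.+1) groves_tax v f h i theta.

Lemma Kform h theta : Tsum h theta =
  (Gsum v f theta *+ m.+1 - Gsum v f theta) + \sum_(i < m.+1) h i (others theta i).
Proof.
rewrite /Tsum /groves_tax big_split /=; congr (_ + _).
have -> : \sum_(i < m.+1) \sum_(j < m.+1 | j != i) v j (f theta) (theta j)
   = \sum_(i < m.+1) (Gsum v f theta - v i (f theta) (theta i)).
  apply: eq_bigr => i _; rewrite /Gsum [X in _ = X - _](bigD1 i) //= addrC addrK; exact: eq_bigr.
by rewrite sumrB sumr_const card_ord.
Qed.

Lemma symm_sum (h : 'I_m.+1 -> ('I_m -> T) -> R) theta :
  \sum_(i < m.+1) symmetrize h (others theta i) =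
  (m.+1`!%:R)^-1 * \sum_(s : {perm 'I_m.+1}) \sum_(i < m.+1) h i (others (permute theta s) i).
Proof.
rewrite /symmetrize -mulr_sumr; congr (_ * _).
under eq_bigr => i _ do rewrite exchange_big.
rewrite exchange_big [RHS]exchange_big; apply: eq_bigr => j _ /=.
exact: key.
Qed.

Lemma fact_neq0 k : (k`!%:R : R) != 0.
Proof. by rewrite pnatr_eq0 -lt0n fact_gt0. Qed.

Lemma Tsym (hG : forall (theta : 'I_m.+1 -> T) (pi : {perm 'I_m.+1}),
          Gsum v f (permute theta pi) = Gsum v f theta)
  (h : 'I_m.+1 -> ('I_m -> T) -> R) theta :
  Tsum (anon (symmetrize h)) theta =
  (m.+1`!%:R)^-1 * \sum_(s : {perm 'I_m.+1}) Tsum h (permute theta s).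
Proof.
have E := Kform (anon (symmetrize h)) theta. rewrite E /anon symm_sum.
rewrite [X in _ = _ * X](eq_bigr (fun s => (Gsum v f theta *+ m.+1 - Gsum v f theta) + \sum_(i < m.+1) h i (others (permute theta s) i))); last by move=> s _; rewrite Kform hG.
rewrite big_split /= sumr_const card_Sn mulrDr; congr (_ + _).
set K := Gsum v f theta *+ m.+1 - Gsum v f theta.
by rewrite -(mulr_natr K) mulrCA mulVf ?mulr1 // fact_neq0.
Qed.

Lemma symm_anon (h0 : ('I_m -> T) -> R) (H : @perm_indep R T m.+1 h0) x :
  symmetrize (@anon R T m.+1 h0) x = h0 x.
Proof.
rewrite /symmetrize /anon.
under eq_bigr => s _ do under eq_bigr => j _ do rewrite H.
rewrite !sumr_const card_Sn card_ord -mulrnA /= -factS.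
by rewrite -(mulr_natr (h0 x)) mulrCA mulVf ?mulr1 // fact_neq0.
Qed.

Lemma symm_indep (h : 'I_m.+1 -> ('I_m -> T) -> R) : perm_indep (symmetrize h).
Proof.
move=> x pi; rewrite /symmetrize; congr (_ * _).
rewrite [RHS](reindex_inj (mulgI pi)) /=; apply: eq_bigr => s _.
apply: eq_bigr => j _; congr (h j); apply: functional_extensionality => k.
by rewrite /permute invMg permM.
Qed.

Lemma Tanon (hG : forall (theta : 'I_m.+1 -> T) (pi : {perm 'I_m.+1}),
          Gsum v f (permute theta pi) = Gsum v f theta)
  (h0 : ('I_m -> T) -> R) (H : @perm_indep R T m.+1 h0) theta :
  Tsum (@anon R T m.+1 h0) theta =
  (m.+1`!%:R)^-1 * \sum_(s : {perm 'I_m.+1}) Tsum (@anon R T m.+1 h0) (permute theta s).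
Proof.
rewrite -Tsym // (Kform (@anon R T m.+1 h0)) (Kform (anon (symmetrize _))); congr (_ + _).
by apply: eq_bigr => i _; rewrite /anon symm_anon.
Qed.

Lemma permute1 (theta : 'I_m.+1 -> T) : permute theta 1%g = theta.
Proof. by apply: functional_extensionality => k; rewrite /permute invg1 perm1. Qed.
End S.

Theorem lemma1 (R : realFieldType) (D Theta0 : Type) (n : nat) (hn : (2 <= n)%N)
  (v : 'I_n -> D -> Theta0 -> R) (f : ('I_n -> Theta0) -> D)
  (hf : efficient v f)
  (h : 'I_n -> ('I_n.-1 -> Theta0) -> R)
  (hG : forall (theta : 'I_n -> Theta0) (pi : {perm 'I_n}),
          Gsum v f (permute theta pi) = Gsum v f theta) :
  perm_indep (symmetrize h) /\
  (feasible (groves_tax v f h) ->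
     feasible (groves_tax v f (anon (symmetrize h)))) /\
  (forall h0 : ('I_n.-1 -> Theta0) -> R, perm_indep h0 ->
     welfare_dominates (groves_tax v f h) (groves_tax v f (anon h0)) ->
     welfare_dominates (groves_tax v f (anon (symmetrize h))) (groves_tax v f (anon h0))).
Proof.
destruct n as [|m]; first by [].
have c_gt0 : (0 : R) < (m.+1`!%:R)^-1 by rewrite invr_gt0 ltr0n fact_gt0.
split; first exact: symm_indep.
split.
  move=> Fh theta.
  change (Tsum v f (anon (symmetrize h)) theta <= 0).
  rewrite Tsym //; apply: mulr_ge0_le0; first exact: ltW.
  apply: le_trans (ler_sum _ (fun s _ => Fh (permute theta s))) _.
  by rewrite big1.
move=> h0 H0 [Hle [th0 Hlt]]; split.
  move=> theta.
  change (Tsum v f (anon h0) theta <= Tsum v f (anon (symmetrize h)) theta).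
  rewrite Tanon // Tsym //; rewrite ler_wpM2l //; first exact: ltW.
  exact: ler_sum (fun s _ => Hle (permute theta s)).
exists th0.
change (Tsum v f (anon h0) th0 < Tsum v f (anon (symmetrize h)) th0).
rewrite Tanon // Tsym // ltr_pM2l //.
rewrite (bigD1 1%g) // [X in _ < X](bigD1 1%g) //= !permute1.
apply: ltr_leD; first exact: Hlt.
exact: ler_sum (fun s _ => Hle (permute th0 s)).
Qed.
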